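(* Let $p$ be a probability distribution over $\{0,1\}^n$ and let $\gamma>0$. For every $\epsilon<\gamma/2$ the following holds: if the adapted ancestral sampling algorithm is given black-box access to real numbers $\pi(x_{1:k})$, for all $k\in[n]$ and all $x_{1:k}\in\{0,1\}^k$, satisfying $|\pi(x_{1:k})-p(x_{1:k})|\le \epsilon/2^k$, then it samples from a distribution $q$ with $$\|q-p\|_{\mathrm{TV}}\le \mathfrak{f}(\gamma)+\exp\!\left(\frac{4\epsilon n}{\gamma}\right)-1 .$$
   Context: For $x\in\{0,1\}^n$, $x_{1:k}=(x_1,\dots,x_k)$ and $p(x_{1:k})=\sum_{x_{k+1},\dots,x_n}p(x)$ is the marginal. Adapted ancestral sampling algorithm: given the estimates $\pi(\cdot)$, it produces $x$ bit by bit; at step $k$, with $x_{1:k-1}$ already fixed, let $a=\pi(x_{1:k-1},0)$ and $b=\pi(x_{1:k-1},1)$. If $a,b\ge0$, it sets $x_k=0$ with probability $a/(a+b)$ and $x_k=1$ otherwise; if one of $a,b$ is negative, it deterministically sets $x_k$ to the value whose estimate is non-negative. The output distribution is $q$. Define $S_\gamma=\{x\in\{0,1\}^n:\ p(x_{1:k})\ge\gamma/2^k\ \text{for all } k\in[n]\}$ and $\mathfrak{f}(\gamma)=1-\sum_{x\in S_\gamma}p(x)$. $\|\cdot\|_{\mathrm{TV}}$ is total variation distance. *)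

(* Defs.v *)
From HB Require Import structures.
From mathcomp Require Import all_boot all_order all_algebra.
From mathcomp Require Import reals sequences exp.
Set Implicit Arguments. Unset Strict Implicit. Unset Printing Implicit Defensive.
Import Order.TTheory GRing.Theory Num.Theory.
Local Open Scope ring_scope.

Section Defs.
Variables (R : realType) (n : nat).

(* x in {0,1}^n is an n-tuple of booleans; x_{1:k} = take k x. *)
Definition is_distr (p : n.-tuple bool -> R) : Prop :=
  (forall x, 0 <= p x) /\ \sum_(x : n.-tuple bool) p x = 1.

Definition marg (p : n.-tuple bool -> R) (s : seq bool) : R :=
  \sum_(x : n.-tuple bool | take (size s) x == s) p x.

(* probability that the adapted ancestral sampler sets the next bit to 0,
   given the already fixed prefix s *)
Definition prob0 (pi : seq bool -> R) (s : seq bool) : R :=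
  let a := pi (rcons s false) in
  let b := pi (rcons s true) in
  if (0 <= a) && (0 <= b) then a / (a + b)
  else if 0 <= a then 1 else 0.

Definition sampler_q (pi : seq bool -> R) (x : n.-tuple bool) : R :=
  \prod_(i < n)
    (if tnth x i then 1 - prob0 pi (take i x) else prob0 pi (take i x)).

Definition in_S (p : n.-tuple bool -> R) (gamma : R) (x : n.-tuple bool) : bool :=
  [forall k : 'I_n, gamma / 2 ^+ k.+1 <= marg p (take k.+1 x)].

Definition frak_f (p : n.-tuple bool -> R) (gamma : R) : R :=
  1 - \sum_(x : n.-tuple bool | in_S p gamma x) p x.

Definition tv_dist (q p : n.-tuple bool -> R) : R :=
  2^-1 * \sum_(x : n.-tuple bool) `|q x - p x|.

End Defs.

(* Main.v *)
Require Import Defs.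
From HB Require Import structures.
From mathcomp Require Import all_boot all_order all_algebra.
From mathcomp Require Import reals sequences exp.
From mathcomp Require Import ring lra.
Import Order.TTheory GRing.Theory Num.Theory.
Local Open Scope ring_scope.

Section S.
Variable R : realType.

Lemma sum_tuple_cons m (F : m.+1.-tuple bool -> R) :
  \sum_(x : m.+1.-tuple bool) F x =
  \sum_(b : bool) \sum_(t : m.-tuple bool) F [tuple of b :: t].
Proof.
rewrite pair_big /=.
rewrite (reindex (fun bt : bool * m.-tuple bool => [tuple of bt.1 :: bt.2])) //=.
exists (fun x : m.+1.-tuple bool => (thead x, [tuple of behead x])).
  by move=> [b t] _ /=; congr pair; apply: val_inj.
by move=> x _; rewrite [in RHS](tuple_eta x).
Qed.

Lemma sum_tree m (g : seq bool -> R) (p0 : seq bool) :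
  \sum_(x : m.-tuple bool) \prod_(i < m)
     (if tnth x i then 1 - g (p0 ++ take i x) else g (p0 ++ take i x)) = 1.
Proof.
elim: m p0 => [|m IH] p0.
  rewrite (big_pred1 [tuple]) => [|t]; [by rewrite big_ord0 | by apply/esym/eqP; exact: tuple0].
rewrite sum_tuple_cons big_bool /=.
have E b : \sum_(t : m.-tuple bool) \prod_(i < m.+1)
   (if tnth [tuple of b :: t] i then 1 - g (p0 ++ take i [tuple of b :: t])
    else g (p0 ++ take i [tuple of b :: t])) =
   (if b then 1 - g p0 else g p0) *
   \sum_(t : m.-tuple bool) \prod_(i < m)
     (if tnth t i then 1 - g (rcons p0 b ++ take i t) else g (rcons p0 b ++ take i t)).
  rewrite mulr_sumr; apply: eq_bigr => t _.
  rewrite big_ord_recl /= cats0; congr (_ * _); apply: eq_bigr => i _.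
  by rewrite tnthS /= cat_rcons.
rewrite !E !IH; lra.
Qed.

Lemma prob0_bnd (pi : seq bool -> R) s : 0 <= prob0 pi s <= 1.
Proof.
rewrite /prob0; set a := pi _; set b := pi _.
case: (boolP (0 <= a)) => ha; case: (boolP (0 <= b)) => hb //=; rewrite ?ler01 ?lexx //.
have [->|hab] := eqVneq (a + b) 0; first by rewrite invr0 mulr0 lexx ler01.
have hp : 0 < a + b by rewrite lt0r hab addr_ge0.
by rewrite divr_ge0 ?addr_ge0 //= ler_pdivrMr // mul1r lerDl.
Qed.

Lemma fac_bnd (pi : seq bool -> R) s (b : bool) :
  0 <= (if b then 1 - prob0 pi s else prob0 pi s) <= 1.
Proof. have := prob0_bnd pi s; case: b => /andP[h1 h2]; apply/andP; split; lra. Qed.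

Lemma prob0_sel (pi : seq bool -> R) s (b : bool) :
  0 < pi (rcons s b) ->
  (if b then 1 - prob0 pi s else prob0 pi s) =
  (if 0 <= pi (rcons s (~~ b)) then pi (rcons s b) / (pi (rcons s b) + pi (rcons s (~~ b))) else 1).
Proof.
move=> hA; rewrite /prob0; case: b hA => /= hA; rewrite (ltW hA) ?andbT.
  case: ifP => hD; last by rewrite hD subr0.
  have hp : pi (rcons s false) + pi (rcons s true) != 0 by rewrite lt0r_neq0 // ltr_wpDl.
  rewrite [pi (rcons s true) + _]addrC; field; exact: hp.
by [].
Qed.

Lemma step_ineq (A D m m1 e u : R) : 0 <= u -> u < 1/2 -> 0 <= e -> e <= u * m1 ->
  m1 <= m -> 0 < m1 -> `|A - m1| <= e -> `|D - (m - m1)| <= e ->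
  (1 - u) / (1 + 2 * u) * m1 <= (if 0 <= D then A / (A + D) else 1) * m.
Proof.
move=> hu0 hu1 he0 heu hm hm1 /ler_normlP [hA1 hA2] /ler_normlP [hD1 hD2].
have hc : 0 < 1 + 2 * u by lra.
case: ifP => hD.
  have hAD : 0 < A + D.
    have : 0 < (1/2 - u) * m1 by apply: mulr_gt0; lra.
    lra.
  rewrite mulrAC ler_pdivrMr //.
  have -> : A / (A + D) * m * (1 + 2 * u) = (A * (m * (1 + 2 * u))) / (A + D).
    by field; apply: lt0r_neq0.
  rewrite ler_pdivlMr //.
  have h1 : 0 <= (A - m1 * (1 - u)) * (m * (1 + 2 * u)).
    apply: mulr_ge0; last (apply: mulr_ge0; lra). have : u * m1 = m1 * u by rewrite mulrC. nra.
  have h2 : 0 <= (m1 * (1 - u)) * (m * (1 + 2 * u) - (A + D)).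
    apply: mulr_ge0; first (apply: mulr_ge0; lra).
    have : e <= u * m by apply: (le_trans heu); apply: ler_wpM2l.
    lra.
  nra.
rewrite mul1r mulrAC ler_pdivrMr // (le_trans _ (ler_wpM2r (ltW hc) hm)) //.
have : 0 <= m1 * (3 * u) by apply: mulr_ge0; lra.
nra.
Qed.

Section M.
Variables (n : nat) (p : n.-tuple bool -> R).

Lemma marg_rcons s : (size s < n)%N ->
  marg p (rcons s false) + marg p (rcons s true) = marg p s.
Proof.
move=> hs; rewrite /marg size_rcons.
rewrite [RHS](bigID (fun x : n.-tuple bool => nth false x (size s))) /= addrC.
congr (_ + _); apply: eq_bigl => x;
  rewrite ?size_rcons (take_nth false) ?size_tuple // eqseq_rcons; by case: nth; rewrite ?andbT ?andbF.
Qed.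

Lemma marg_ge0 s : (forall x, 0 <= p x) -> 0 <= marg p s.
Proof. by move=> h; apply: sumr_ge0. Qed.

Lemma marg_nil : is_distr p -> marg p [::] = 1.
Proof. by move=> [_ h]; rewrite /marg -h; apply: eq_bigl => x; rewrite take0. Qed.

Lemma marg_full (x : n.-tuple bool) : marg p x = p x.
Proof.
rewrite /marg (big_pred1 x) // => y /=.
by rewrite size_tuple -{1}(size_tuple y) take_size.
Qed.
End M.
End S.

Theorem theorem7 (R : realType) (n : nat) (p : n.-tuple bool -> R)
  (gamma eps : R) (pi : seq bool -> R) :
  is_distr p -> 0 < gamma -> eps < gamma / 2 ->
  (forall s : seq bool, (0 < size s <= n)%N ->
     `|pi s - marg p s| <= eps / 2 ^+ size s) ->
  tv_dist (sampler_q pi) p <=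
    frak_f p gamma + expR (4 * eps * n%:R / gamma) - 1.
Proof.
move=> hp hg heps hpi.
have [hp0 hp1] := hp.
set u := eps / gamma.
set c := (1 - u) / (1 + 2 * u).
have hu1 : u < 1/2 by rewrite /u ltr_pdivrMr //; lra.
have hepos : (0 < n)%N -> 0 <= eps.
  move=> hn.
  have h : `|pi [:: false] - marg p [:: false]| <= eps / 2 ^+ 1 by apply: hpi; rewrite /= hn.
  have := le_trans (normr_ge0 _) h; rewrite expr1; lra.
have hu0 : (0 < n)%N -> 0 <= u by move=> /hepos h; rewrite /u divr_ge0 // ltW.
have hc0 : (0 < n)%N -> 0 <= c <= 1.
  move=> /hu0 h; have hc : 0 < 1 + 2 * u by lra.
  rewrite /c divr_ge0 /=; [|lra|lra]; rewrite ler_pdivrMr //; lra.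
have key : forall x : n.-tuple bool, in_S p gamma x -> c ^+ n * p x <= sampler_q pi x.
  move=> x hx.
  have G : forall k, (k <= n)%N -> c ^+ k * marg p (take k x) <=
     \prod_(0 <= i < k) (if nth false x i then 1 - prob0 pi (take i x) else prob0 pi (take i x)).
    elim => [|k IH] hk.
      by rewrite big_nil expr0 mul1r take0 marg_nil.
    have hkn : (k < n)%N := hk.
    have npos : (0 < n)%N by apply: leq_ltn_trans hkn.
    rewrite big_nat_recr //= exprSr -mulrA.
    have hsz : size (take k x) = k by rewrite size_takel // size_tuple ltnW.
    have ht : take k.+1 x = rcons (take k x) (nth false x k) by rewrite (take_nth false) // size_tuple.
    rewrite ht.
    have hsum : forall bb, marg p (rcons (take k x) bb) + marg p (rcons (take k x) (~~ bb)) = marg p (take k x).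
      by case; rewrite -(@marg_rcons R n p (take k x)) ?hsz // addrC.
    move: (hsum (nth false x k)).
    have hm1g : gamma / 2 ^+ k.+1 <= marg p (rcons (take k x) (nth false x k)).
      by have := (forallP hx) (Ordinal hkn); rewrite /= ht.
    have hA : `|pi (rcons (take k x) (nth false x k)) - marg p (rcons (take k x) (nth false x k))| <= eps / 2 ^+ k.+1.
      by have := hpi (rcons (take k x) (nth false x k)); rewrite size_rcons hsz; apply; rewrite /= hk.
    have hD : `|pi (rcons (take k x) (~~ nth false x k)) - marg p (rcons (take k x) (~~ nth false x k))| <= eps / 2 ^+ k.+1.
      by have := hpi (rcons (take k x) (~~ nth false x k)); rewrite size_rcons hsz; apply; rewrite /= hk.
    have hF := fac_bnd _ pi (take k x) (nth false x k).
    move: hm1g hA hD hF IH.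
    set b := nth false x k; set s := take k x.
    set m1 := marg p (rcons s b); set m := marg p s; set m2 := marg p (rcons s (~~ b)).
    set A := pi (rcons s b); set D := pi (rcons s (~~ b)).
    move=> hm1g hA hD hF IH hs.
    have h2 : 0 < 2 ^+ k.+1 :> R by apply: exprn_gt0.
    have he0 : 0 <= eps / 2 ^+ k.+1 := divr_ge0 (hepos npos) (ltW h2).
    have heu : eps / 2 ^+ k.+1 <= u * m1.
      apply: (le_trans _ (ler_wpM2l (hu0 npos) hm1g)).
      rewrite le_eqVlt; apply/orP; left; apply/eqP; rewrite /u; field.
      by rewrite !lt0r_neq0.
    have hm1 : 0 < m1 := lt_le_trans (divr_gt0 hg h2) hm1g.
    have hm20 : 0 <= m2 := marg_ge0 _ _ _ _ hp0.
    have hmm1 : m1 <= m by lra.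
    have hD' : `|D - (m - m1)| <= eps / 2 ^+ k.+1 by have -> : m - m1 = m2 by lra.
    have hApos : 0 < A.
      move: hA => /ler_normlP [h3 h4].
      have : 0 < (1/2 - u) * m1 by apply: mulr_gt0; lra.
      nra.
    have st := step_ineq _ _ _ _ _ _ _ (hu0 npos) hu1 he0 heu hmm1 hm1 hA hD'.
    rewrite (prob0_sel _ _ _ _ hApos) in hF *.
    apply: (le_trans (ler_wpM2l (exprn_ge0 _ (proj1 (andP (hc0 npos)))) st)).
    rewrite mulrCA mulrC; apply: ler_wpM2r; first by case/andP: hF.
    exact: IH (ltnW hk).
  have := G n (leqnn n).
  rewrite take_oversize ?size_tuple // marg_full => H; apply: (le_trans H).
  rewrite /sampler_q big_mkord le_eqVlt; apply/orP; left; apply/eqP.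
  by apply: eq_bigr => i _; rewrite (tnth_nth false).
have hq0 : forall x : n.-tuple bool, 0 <= sampler_q pi x.
  by move=> x; rewrite /sampler_q; apply: prodr_ge0 => i _; case/andP: (fac_bnd _ pi (take i x) (tnth x i)).
have hq1 : \sum_(x : n.-tuple bool) sampler_q pi x = 1.
  by rewrite -(sum_tree _ n (prob0 pi) [::]).
set C := c ^+ n.
have hC : 0 <= C <= 1.
  case: (posnP n) => [n0|npos]; first by rewrite /C n0 expr0 ler01 lexx.
  by case/andP: (hc0 npos) => h1 h2; rewrite /C exprn_ge0 //= exprn_ile1.
set h := fun x : n.-tuple bool => if in_S p gamma x then (1 - C) * p x else p x.
have hpt : forall x, `|sampler_q pi x - p x| <= sampler_q pi x - p x + 2 * h x.
  move=> x; rewrite /h; have := hq0 x; have := hp0 x.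
  case: ifP => hS hpx hqx; rewrite ler_norml; apply/andP; split.
  - have := key x hS; rewrite /C mulrBl mul1r; lra.
  - have : 0 <= (1 - C) * p x by apply: mulr_ge0 => //; case/andP: hC => _ ?; lra.
    lra.
  - lra.
  - lra.
have hsh : \sum_x h x = (1 - C) * \sum_(x | in_S p gamma x) p x + \sum_(x | ~~ in_S p gamma x) p x.
  rewrite (bigID (in_S p gamma)) /= mulr_sumr; congr (_ + _); apply: eq_bigr => x hx; rewrite /h.
    by rewrite hx.
  by rewrite (negbTE hx).
have hsplit : \sum_(x | in_S p gamma x) p x + \sum_(x | ~~ in_S p gamma x) p x = 1.
  by rewrite -hp1 [in RHS](bigID (in_S p gamma)).
have hnS : 0 <= \sum_(x | ~~ in_S p gamma x) p x by apply: sumr_ge0.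
have hE : 1 - C <= expR (4 * eps * n%:R / gamma) - 1.
  case: (posnP n) => [n0|npos].
    by rewrite /C n0 expr0 mulr0 mul0r expR0; lra.
  have u0 := hu0 npos.
  have hu' : 0 < 1 - u by lra.
  set r := (1 + 2 * u) / (1 - u).
  have hr1 : 1 <= r by rewrite /r ler_pdivlMr //; lra.
  have hr : r <= expR (4 * u).
    rewrite /r ler_pdivrMr //.
    have -> : 4 * u = 2 * u + 2 * u by ring.
    rewrite expRD.
    have hy := expR_ge1Dx (2 * u).
    have h1 : (1 + 2 * u) * (1 + 2 * u) <= expR (2 * u) * expR (2 * u).
      by apply: ler_pM => //; lra.
    have h2 : (1 + 2 * u) * (1 + 2 * u) * (1 - u) <= expR (2 * u) * expR (2 * u) * (1 - u).
      by apply: ler_wpM2r => //; lra.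
    have h3 : 0 <= (1 + 2 * u) * u * (1 - 2 * u).
      by apply: mulr_ge0; [apply: mulr_ge0|]; lra.
    nra.
  have hcr : c * r = 1 by rewrite /c /r; field; apply/andP; split; apply: lt0r_neq0; lra.
  have hCR : C * r ^+ n = 1 by rewrite /C -exprMn hcr expr1n.
  have hRpos : 0 < r ^+ n by apply: exprn_gt0; lra.
  have hRE : r ^+ n <= expR (4 * eps * n%:R / gamma).
    have -> : 4 * eps * n%:R / gamma = n%:R * (4 * u).
      by rewrite /u; field; apply: lt0r_neq0.
    rewrite expRM_natl; apply: lerXn2r => //; rewrite ?nnegrE; lra.
  suff : 1 - C <= r ^+ n - 1 by lra.
  move: hCR hRpos; generalize (r ^+ n) => X hX1 hX2.
  have : 0 <= (X - 1) * (X - 1) by apply: mulr_ge0 => //; nra.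
  nra.
have htv : tv_dist (sampler_q pi) p <= \sum_x h x.
  rewrite /tv_dist.
  have : \sum_(x : n.-tuple bool) `|sampler_q pi x - p x| <= \sum_(x : n.-tuple bool) (sampler_q pi x - p x + 2 * h x).
    by apply: ler_sum => x _; exact: hpt.
  rewrite big_split /= sumrB hq1 hp1 -mulr_sumr subrr add0r => H2.
  have : 0 < 2^-1 :> R by rewrite invr_gt0 ltr0n.
  nra.
rewrite /frak_f; apply: (le_trans htv); rewrite hsh.
have : (1 - C) * \sum_(x | in_S p gamma x) p x <= 1 - C.
  rewrite -[leRHS]mulr1; apply: ler_wpM2l; first by case/andP: hC => _ ?; lra.
  lra.
lra.
Qed.
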